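(* Let $V:[0,\infty)\to\mathbb{R}$ be càdlàg with finite variation on compact intervals. Let $t>0$, and let $x$ be a simple level for $V$ with $x\neq V(0)$ and $x\neq V(t)$. Then the sets $(0,t]\cap\mathcal{I}(x)$ and $(0,t]\cap\mathcal{D}(x)$ are finite. The sum below has only finitely many nonzero terms, and $$\mathbf{1}_{[x,\infty)}(V(t))=\mathbf{1}_{[x,\infty)}(V(0))+\ell^x(t)+\sum_{0<s\le t}\Big(\mathbf{1}_{[x,\infty)}(V(s))-\mathbf{1}_{[x,\infty)}(V(s-))\Big).$$
   Context: $V(s-)$ is the left limit and $\Delta V(s)=V(s)-V(s-)$. A level $x\in\mathbb{R}$ is simple for $V$ if two conditions hold. First, the set $\{t>0: V(t-)<x<V(t)\text{ or }V(t)<x<V(t-)\text{ or }V(t)=x\}$ is discrete. Second, there is no $t>0$ with $\Delta V(t)\ne0$ and $x\in\{V(t),V(t-)\}$. We write $t\in\mathcal{I}(x)$ (i.e. $V$ increases through level $x$ at time $t$) if two conditions hold. First, $V(t)=x$ and $V$ is continuous at $t$. Second, there is $\delta>0$ such that for all $s\ge0$ with $0<|s-t|<\delta$, $V(s)-V(t)$ has the same strict sign as $s-t$. We write $t\in\mathcal{D}(x)$ (i.e. $V$ decreases through level $x$ at time $t$) if $-V$ increases through $-x$ at time $t$. Finally $\ell^x(t)=\mathrm{Card}((0,t]\cap\mathcal{I}(x))-\mathrm{Card}((0,t]\cap\mathcal{D}(x))$. *)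

(* Defs.v *)
From Stdlib Require Import Reals Lra List Sorting.Sorted.
Import ListNotations.
Open Scope R_scope.

Definition right_cont (V : R -> R) (s : R) : Prop :=
  forall eps, eps > 0 -> exists delta, delta > 0 /\
    forall u, s <= u < s + delta -> Rabs (V u - V s) < eps.

Definition is_left_limit (V : R -> R) (s l : R) : Prop :=
  forall eps, eps > 0 -> exists delta, delta > 0 /\
    forall u, s - delta < u < s -> Rabs (V u - l) < eps.

Definition cadlag (V : R -> R) : Prop :=
  (forall s, 0 <= s -> right_cont V s) /\
  (forall s, 0 < s -> exists l, is_left_limit V s l).

Fixpoint variation (V : R -> R) (l : list R) : R :=
  match l with
  | a :: ((b :: _) as l') => Rabs (V b - V a) + variation V l'
  | _ => 0
  end.

Definition finite_variation (V : R -> R) : Prop :=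
  forall T, 0 <= T -> exists M, forall l : list R,
    Sorted Rle l -> (forall u, In u l -> 0 <= u <= T) -> variation V l <= M.

Definition cont_at (V : R -> R) (t : R) : Prop :=
  forall eps, eps > 0 -> exists delta, delta > 0 /\
    forall s, 0 <= s -> Rabs (s - t) < delta -> Rabs (V s - V t) < eps.

(* x is a simple level for V; Vm s stands for V(s-). *)
Definition crossing_set (V Vm : R -> R) (x t : R) : Prop :=
  0 < t /\ ((Vm t < x < V t) \/ (V t < x < Vm t) \/ V t = x).

Definition simple_level (V Vm : R -> R) (x : R) : Prop :=
  (forall t, crossing_set V Vm x t ->
     exists delta, delta > 0 /\
       forall s, crossing_set V Vm x s -> s <> t -> delta <= Rabs (s - t)) /\
  (forall t, 0 < t -> V t - Vm t <> 0 -> x <> V t /\ x <> Vm t).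

Definition incr_through (V : R -> R) (x t : R) : Prop :=
  V t = x /\ cont_at V t /\
  exists delta, delta > 0 /\
    forall s, 0 <= s -> 0 < Rabs (s - t) < delta ->
      (s < t -> V s - V t < 0) /\ (s > t -> V s - V t > 0).

Definition decr_through (V : R -> R) (x t : R) : Prop :=
  incr_through (fun s => - V s) (- x) t.

Definition ind_ge (x y : R) : R := if Rle_dec x y then 1 else 0.

Fixpoint sum_list (f : R -> R) (l : list R) : R :=
  match l with
  | [] => 0
  | a :: l' => f a + sum_list f l'
  end.

(* Main.v *)
Require Import Defs.
From Stdlib Require Import Reals Lra List Sorting.Sorted Permutation Classical ClassicalEpsilon.
Import ListNotations.
Open Scope R_scope.

Ltac rabs := unfold Rabs in *; repeat match goal with
  | H : context[Rcase_abs ?a] |- _ => destruct (Rcase_abs a)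
  | |- context[Rcase_abs ?a] => destruct (Rcase_abs a) end; try lra.

Lemma sign_keep (W Wm : R -> R) (a b : R) :
  a <= b ->
  (forall s, a <= s <= b -> right_cont W s) ->
  (forall s, a < s <= b -> is_left_limit W s (Wm s)) ->
  (forall s, a < s <= b -> Wm s >= 0 -> W s > 0) ->
  W a > 0 -> forall u, a <= u <= b -> W u > 0.
Proof.
  intros hab hrc hll hjump ha.
  set (E := fun s => a <= s <= b /\ forall u, a <= u <= s -> W u > 0).
  assert (hb : bound E) by (exists b; intros s [hs _]; lra).
  assert (haE : E a) by (split; [lra| intros u hu; replace u with a by lra; exact ha]).
  destruct (completeness E hb (ex_intro _ a haE)) as [m [hub hlub]].
  assert (ham : a <= m) by (apply hub; exact haE).
  assert (hmb : m <= b) by (apply hlub; intros s [hs _]; lra).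
  assert (hbelow : forall u, a <= u < m -> W u > 0).
  { intros u hu. destruct (classic (exists s, E s /\ u < s)) as [[s [[hs1 hs2] hus]]|hn].
    - apply hs2; lra.
    - exfalso. assert (m <= u).
      { apply hlub. intros s hs. destruct (Rle_lt_dec s u); auto.
        exfalso; apply hn; exists s; auto. }
      lra. }
  assert (hWm : W m > 0).
  { destruct (Req_dec m a) as [e|hne]. { rewrite e; exact ha. }
    apply hjump; [lra|].
    destruct (Rge_or_lt (Wm m) 0) as [|hlt]; auto. exfalso.
    destruct (hll m ltac:(lra) (- Wm m) ltac:(lra)) as [d [hd hdd]].
    set (u0 := (Rmax a (m - d) + m)/2).
    assert (h1 := Rmax_l a (m-d)). assert (h2 := Rmax_r a (m-d)). unfold u0 in *.
    assert (h3 : Rmax a (m-d) < m) by (apply Rmax_lub_lt; lra).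
    specialize (hdd u0 ltac:(unfold u0; lra)).
    specialize (hbelow u0 ltac:(unfold u0; lra)). rabs. }
  assert (hall : forall u, a <= u <= m -> W u > 0).
  { intros u hu. destruct (Req_dec u m) as [->|]; auto. apply hbelow; lra. }
  destruct (Rlt_or_le m b) as [hlt|hge].
  - exfalso.
    destruct (hrc m ltac:(lra) (W m) hWm) as [d [hd hdd]].
    set (m' := Rmin b (m + d/2)).
    assert (h1 : m' <= b) by apply Rmin_l. assert (h2 : m' <= m + d/2) by apply Rmin_r.
    assert (h3 : m < m') by (apply Rmin_glb_lt; lra).
    assert (E m').
    { split; [lra|]. intros u hu. destruct (Rlt_or_le u m). apply hbelow; lra.
      specialize (hdd u ltac:(lra)). rabs. }
    assert (m' <= m) by (apply hub; auto). lra.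
  - intros u hu. apply hall; lra.
Qed.

Lemma sum_app f l1 l2 : sum_list f (l1 ++ l2) = sum_list f l1 + sum_list f l2.
Proof. induction l1; simpl; [lra|rewrite IHl1; lra]. Qed.

Lemma sum_perm f l1 l2 : Permutation l1 l2 -> sum_list f l1 = sum_list f l2.
Proof. induction 1; simpl; lra. Qed.

Lemma sum_filter_nz g l : sum_list g l =
  sum_list g (filter (fun s => if Req_EM_T (g s) 0 then false else true) l).
Proof. induction l; simpl; auto. destruct (Req_EM_T (g a) 0); simpl; lra. Qed.

Lemma sum_eq_support g l1 l2 : NoDup l1 -> NoDup l2 ->
  (forall s, g s <> 0 -> (In s l1 <-> In s l2)) -> sum_list g l1 = sum_list g l2.
Proof.
  intros h1 h2 h. rewrite (sum_filter_nz g l1), (sum_filter_nz g l2).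
  apply sum_perm, NoDup_Permutation; try apply NoDup_filter; auto.
  intros s. rewrite !filter_In. destruct (Req_EM_T (g s) 0).
  - split; intros [_ H]; discriminate.
  - rewrite h; auto. tauto.
Qed.

Definition indP (P : Prop) : R := if excluded_middle_informative P then 1 else 0.

Lemma sum_indP (P : R -> Prop) l : sum_list (fun s => indP (P s)) l =
  INR (length (filter (fun s => if excluded_middle_informative (P s) then true else false) l)).
Proof.
  induction l; simpl; auto. unfold indP at 1.
  destruct (excluded_middle_informative (P a)); cbn [filter length]; rewrite IHl; try rewrite S_INR; lra.
Qed.

Definition Hyp (V Vm : R -> R) (x : R) : Prop :=
  cadlag V /\ (forall s, 0 < s -> is_left_limit V s (Vm s)) /\ simple_level V Vm x /\ x <> V 0.

Lemma ind_close x u w : Rabs (u - w) < Rabs (w - x) -> ind_ge x u = ind_ge x w.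
Proof. intros h. unfold ind_ge. destruct (Rle_dec x u), (Rle_dec x w); auto; exfalso; rabs. Qed.

Lemma ind_iff x u w : u <> x -> w <> x -> ind_ge x u = ind_ge x w -> (u < x <-> w < x).
Proof. unfold ind_ge. intros hu hw. destruct (Rle_dec x u), (Rle_dec x w); intros h; try lra. Qed.

Lemma L_none V Vm x (H : Hyp V Vm x) a b : 0 <= a <= b -> V a <> x ->
  (forall s, crossing_set V Vm x s -> a < s <= b -> False) ->
  forall u, a <= u <= b -> V u <> x /\ ind_ge x (V u) = ind_ge x (V a).
Proof.
  destruct H as [[hrc hll] [hVm [[hiso hjmp] hx0]]].
  intros hab hVa hnc u hu.
  assert (hnc' : forall s, a < s <= b -> ~ crossing_set V Vm x s) by (intros s hs hc; eapply hnc; eauto).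
  destruct (Rlt_or_le x (V a)) as [hgt|hle].
  - assert (K : forall u, a <= u <= b -> V u - x > 0).
    { apply (sign_keep (fun s => V s - x) (fun s => Vm s - x) a b); [lra| | | |lra].
      - intros s hs eps heps. destruct (hrc s ltac:(lra) eps heps) as [d [hd hdd]].
        exists d; split; auto. intros v hv. replace (V v - x - (V s - x)) with (V v - V s) by ring. auto.
      - intros s hs eps heps. destruct (hVm s ltac:(lra) eps heps) as [d [hd hdd]].
        exists d; split; auto. intros v hv. replace (V v - x - (Vm s - x)) with (V v - Vm s) by ring. auto.
      - intros s hs hm. cbv beta in *. specialize (hnc' s hs). unfold crossing_set in hnc'.
        destruct (Rtotal_order (V s) x) as [h1|[h1|h1]];
        destruct (Rtotal_order (Vm s) x) as [h2|[h2|h2]]; try lra;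
        first [destruct (hjmp s ltac:(lra) ltac:(lra)); lra | exfalso; apply hnc'; split; [lra|]; tauto]. }
    specialize (K u hu). split; [lra|]. unfold ind_ge.
    destruct (Rle_dec x (V u)), (Rle_dec x (V a)); lra.
  - assert (hlt : V a < x) by lra.
    assert (K : forall u, a <= u <= b -> x - V u > 0).
    { apply (sign_keep (fun s => x - V s) (fun s => x - Vm s) a b); [lra| | | |lra].
      - intros s hs eps heps. destruct (hrc s ltac:(lra) eps heps) as [d [hd hdd]].
        exists d; split; auto. intros v hv. replace (x - V v - (x - V s)) with (- (V v - V s)) by ring.
        rewrite Rabs_Ropp. auto.
      - intros s hs eps heps. destruct (hVm s ltac:(lra) eps heps) as [d [hd hdd]].
        exists d; split; auto. intros v hv. replace (x - V v - (x - Vm s)) with (- (V v - Vm s)) by ring.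
        rewrite Rabs_Ropp. auto.
      - intros s hs hm. cbv beta in *. specialize (hnc' s hs). unfold crossing_set in hnc'.
        destruct (Rtotal_order (V s) x) as [h1|[h1|h1]];
        destruct (Rtotal_order (Vm s) x) as [h2|[h2|h2]]; try lra;
        first [destruct (hjmp s ltac:(lra) ltac:(lra)); lra | exfalso; apply hnc'; split; [lra|]; tauto]. }
    specialize (K u hu). split; [lra|]. unfold ind_ge.
    destruct (Rle_dec x (V u)), (Rle_dec x (V a)); lra.
Qed.

Lemma cross_near V Vm x (H : Hyp V Vm x) c lo eps : crossing_set V Vm x c -> lo < c -> eps > 0 ->
  exists u1 u2, lo < u1 <= c /\ lo < u2 <= c /\ V u1 < x + eps /\ V u2 > x - eps.
Proof.
  destruct H as [[hrc hll] [hVm [[hiso hjmp] hx0]]].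
  intros [hc0 hc] hlo heps.
  destruct (hVm c hc0 eps heps) as [d [hd hdd]].
  set (u0 := (Rmax lo (c - d) + c)/2).
  assert (h1 := Rmax_l lo (c-d)). assert (h2 := Rmax_r lo (c-d)).
  assert (h3 : Rmax lo (c-d) < c) by (apply Rmax_lub_lt; lra).
  specialize (hdd u0 ltac:(unfold u0; lra)).
  destruct hc as [hc|[hc|hc]].
  - exists u0, c. unfold u0 in *. repeat split; try lra. rabs.
  - exists c, u0. unfold u0 in *. repeat split; try lra. rabs.
  - exists c, c. repeat split; lra.
Qed.

Lemma IsoL V Vm x (H : Hyp V Vm x) m : 0 < m ->
  exists v, 0 <= v < m /\ V v <> x /\ forall s, crossing_set V Vm x s -> v < s < m -> False.
Proof.
  intros hm.
  assert (hv0 : exists v0, v0 < m /\ forall s, crossing_set V Vm x s -> v0 < s < m -> False).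
  { pose proof H as H'. destruct H' as [[hrc hll] [hVm [[hiso hjmp] hx0]]].
    destruct (classic (crossing_set V Vm x m)) as [hc|hnc].
    - destruct (hiso m hc) as [d [hd hdd]]. exists (m - d). split; [lra|].
      intros s hs hsm. specialize (hdd s hs ltac:(lra)). rabs.
    - apply NNPP; intro hn.
      assert (hex : forall v0, v0 < m -> exists s, crossing_set V Vm x s /\ v0 < s < m).
      { intros v0 hv0. apply NNPP; intro hno. apply hn. exists v0. split; auto.
        intros s hs hs'. apply hno. exists s; auto. }
      assert (hVmx : Vm m = x).
      { destruct (Rtotal_order (Vm m) x) as [h|[h|h]]; auto; exfalso.
        - destruct (hVm m hm ((x - Vm m)/3) ltac:(lra)) as [d [hd hdd]].
          destruct (hex (m - d) ltac:(lra)) as [s [hs hsm]].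
          destruct (cross_near V Vm x H s (m - d) ((x - Vm m)/3) hs ltac:(lra) ltac:(lra))
            as [u1 [u2 [hu1 [hu2 [hv1 hv2]]]]].
          specialize (hdd u2 ltac:(lra)). rabs.
        - destruct (hVm m hm ((Vm m - x)/3) ltac:(lra)) as [d [hd hdd]].
          destruct (hex (m - d) ltac:(lra)) as [s [hs hsm]].
          destruct (cross_near V Vm x H s (m - d) ((Vm m - x)/3) hs ltac:(lra) ltac:(lra))
            as [u1 [u2 [hu1 [hu2 [hv1 hv2]]]]].
          specialize (hdd u1 ltac:(lra)). rabs. }
      apply hnc. split; auto. right; right.
      destruct (Req_dec (V m - Vm m) 0) as [e|ne]; [lra|].
      destruct (hjmp m hm ne); lra. }
  destruct hv0 as [v0 [hv0 hnc]].
  set (v := (Rmax 0 v0 + m)/2).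
  assert (h1 := Rmax_l 0 v0). assert (h2 := Rmax_r 0 v0).
  assert (h3 : Rmax 0 v0 < m) by (apply Rmax_lub_lt; lra).
  exists v. unfold v in *. split; [lra|]. split.
  - intro e. apply (hnc ((Rmax 0 v0 + m)/2)); [|lra]. split; [lra|]. right; right; auto.
  - intros s hs hsv. apply (hnc s hs). lra.
Qed.

Lemma IsoR V Vm x (H : Hyp V Vm x) m : 0 <= m ->
  exists w, m < w /\ forall s, crossing_set V Vm x s -> m < s < w -> False.
Proof.
  intros hm. pose proof H as H'. destruct H' as [[hrc hll] [hVm [[hiso hjmp] hx0]]].
  destruct (classic (crossing_set V Vm x m)) as [hc|hnc].
  - destruct (hiso m hc) as [d [hd hdd]]. exists (m + d). split; [lra|].
    intros s hs hsm. specialize (hdd s hs ltac:(lra)). rabs.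
  - apply NNPP; intro hn.
    assert (hex : forall w, m < w -> exists s, crossing_set V Vm x s /\ m < s < w).
    { intros w hw. apply NNPP; intro hno. apply hn. exists w. split; auto.
      intros s hs hs'. apply hno. exists s; auto. }
    assert (hVx : V m = x).
    { destruct (Rtotal_order (V m) x) as [h|[h|h]]; auto; exfalso.
      - destruct (hrc m hm ((x - V m)/3) ltac:(lra)) as [d [hd hdd]].
        destruct (hex (m + d) ltac:(lra)) as [s [hs hsm]].
        destruct (cross_near V Vm x H s m ((x - V m)/3) hs ltac:(lra) ltac:(lra))
          as [u1 [u2 [hu1 [hu2 [hv1 hv2]]]]].
        specialize (hdd u2 ltac:(lra)). rabs.
      - destruct (hrc m hm ((V m - x)/3) ltac:(lra)) as [d [hd hdd]].
        destruct (hex (m + d) ltac:(lra)) as [s [hs hsm]].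
        destruct (cross_near V Vm x H s m ((V m - x)/3) hs ltac:(lra) ltac:(lra))
          as [u1 [u2 [hu1 [hu2 [hv1 hv2]]]]].
        specialize (hdd u1 ltac:(lra)). rabs. }
    destruct (Req_dec m 0) as [e|ne].
    + subst m. auto.
    + apply hnc. split; [lra|]. right; right; auto.
Qed.

Lemma cont_of (V : R -> R) c : right_cont V c -> is_left_limit V c (V c) -> cont_at V c.
Proof.
  intros hr hl eps heps. destruct (hr eps heps) as [d1 [hd1 h1]]. destruct (hl eps heps) as [d2 [hd2 h2]].
  exists (Rmin d1 d2). split; [apply Rmin_glb_lt; lra|]. intros s hs hsc.
  assert (m1 := Rmin_l d1 d2). assert (m2 := Rmin_r d1 d2).
  destruct (Rle_or_lt c s). apply h1. rabs. apply h2. rabs.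
Qed.

Lemma incr_char (W : R -> R) y a c b : 0 <= a < c -> c < b -> W c = y -> cont_at W c ->
  (forall s, a <= s < c -> W s <> y /\ (W s < y <-> W a < y)) ->
  (forall s, c < s <= b -> W s <> y /\ (W s > y <-> W b > y)) ->
  (incr_through W y c <-> (W a < y /\ W b > y)).
Proof.
  intros hac hcb hWc hcont hl hr. split.
  - intros [_ [_ [d [hd hdd]]]].
    set (s1 := (Rmax a (c - d) + c)/2).
    assert (h1 := Rmax_l a (c-d)). assert (h2 := Rmax_r a (c-d)).
    assert (h3 : Rmax a (c-d) < c) by (apply Rmax_lub_lt; lra).
    set (s2 := (c + Rmin b (c + d))/2).
    assert (h4 := Rmin_l b (c+d)). assert (h5 := Rmin_r b (c+d)).
    assert (h6 : c < Rmin b (c+d)) by (apply Rmin_glb_lt; lra).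
    assert (k1 : 0 < Rabs (s1 - c) < d) by (unfold s1; rabs).
    assert (k2 : 0 < Rabs (s2 - c) < d) by (unfold s2; rabs).
    destruct (hdd s1 ltac:(unfold s1; lra) k1) as [k3 _].
    destruct (hdd s2 ltac:(unfold s2; lra) k2) as [_ k4].
    specialize (k3 ltac:(unfold s1; lra)). specialize (k4 ltac:(unfold s2; lra)).
    destruct (hl s1 ltac:(unfold s1; lra)) as [_ e1]. destruct (hr s2 ltac:(unfold s2; lra)) as [_ e2].
    split; [apply e1|apply e2]; lra.
  - intros [ha hb]. split; auto. split; auto.
    exists (Rmin (c - a) (b - c)). split; [apply Rmin_glb_lt; lra|].
    assert (m1 := Rmin_l (c - a) (b - c)). assert (m2 := Rmin_r (c - a) (b - c)).
    intros s hs0 hs. split; intros hsc.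
    + destruct (hl s ltac:(rabs)) as [ne e]. assert (W s < y) by (apply e; auto). lra.
    + destruct (hr s ltac:(rabs)) as [ne e]. assert (W s > y) by (apply e; auto). lra.
Qed.

Definition kap (V Vm : R -> R) (x s : R) : R :=
  indP (incr_through V x s) - indP (decr_through V x s) + (ind_ge x (V s) - ind_ge x (Vm s)).

Lemma indP_true P : P -> indP P = 1.
Proof. unfold indP; destruct (excluded_middle_informative P); tauto. Qed.
Lemma indP_false (P : Prop) : ~ P -> indP P = 0.
Proof. unfold indP; destruct (excluded_middle_informative P); tauto. Qed.

Lemma L_one V Vm x (H : Hyp V Vm x) a c b : 0 <= a < c -> c <= b -> V a <> x -> V b <> x ->
  crossing_set V Vm x c -> (forall s, crossing_set V Vm x s -> a < s <= b -> s = c) ->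
  ind_ge x (V b) = ind_ge x (V a) + kap V Vm x c.
Proof.
  intros hac hcb hVa hVb hc hone.
  pose proof H as H'. destruct H' as [[hrc hll] [hVm [[hiso hjmp] hx0]]].
  assert (hleft : forall s, a <= s < c -> V s <> x /\ ind_ge x (V s) = ind_ge x (V a)).
  { intros s hs. apply (L_none V Vm x H a s); try lra.
    intros s' hs' hs''. specialize (hone s' hs' ltac:(lra)). lra. }
  unfold kap.
  destruct (Req_dec (V c) x) as [hVc|hVc].
  - assert (hcb' : c < b) by (destruct (Req_dec c b); [subst; lra|lra]).
    assert (hright : forall s, c < s <= b -> V s <> x /\ ind_ge x (V s) = ind_ge x (V b)).
    { intros s hs.
      assert (hsx : V s <> x).
      { intro e. assert (s = c) by (apply hone; [split; [lra|right; right; auto]|lra]). lra. }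
      destruct (L_none V Vm x H s b ltac:(lra) hsx) with (u := b) as [_ e]; [|lra|split; auto].
      intros s' hs' hs''. specialize (hone s' hs' ltac:(lra)). lra. }
    assert (hVmc : Vm c = V c).
    { destruct (Req_dec (V c - Vm c) 0) as [e|ne]; [lra|]. destruct (hjmp c ltac:(lra) ne); lra. }
    assert (hcont : cont_at V c).
    { apply cont_of. apply hrc; lra. rewrite <- hVmc. apply hVm; lra. }
    assert (HI := incr_char V x a c b ltac:(lra) hcb' hVc hcont).
    assert (HD := incr_char (fun s => - V s) (- x) a c b ltac:(lra) hcb' ltac:(lra)).
    assert (hcont' : cont_at (fun s => - V s) c).
    { intros eps heps. destruct (hcont eps heps) as [d [hd hdd]]. exists d; split; auto.
      intros s hs hsc. replace (- V s - - V c) with (- (V s - V c)) by ring. rewrite Rabs_Ropp. auto. }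
    specialize (HD hcont').
    assert (HI' : incr_through V x c <-> V a < x /\ V b > x).
    { apply HI.
      intros s hs. destruct (hleft s hs) as [n e]. split; auto. apply ind_iff in e; auto.
      intros s hs. destruct (hright s hs) as [n e]. split; auto. apply ind_iff in e; auto; lra. }
    assert (HD' : decr_through V x c <-> V a > x /\ V b < x).
    { unfold decr_through. rewrite HD. lra.
      intros s hs. destruct (hleft s hs) as [n e]. split; [lra|]. cbv beta. apply ind_iff in e; auto; lra.
      intros s hs. destruct (hright s hs) as [n e]. split; [lra|]. cbv beta. apply ind_iff in e; auto; lra. }
    rewrite hVmc. unfold indP.
    destruct (excluded_middle_informative (incr_through V x c)) as [i1|i1];
    destruct (excluded_middle_informative (decr_through V x c)) as [i2|i2];
    rewrite HI' in i1; rewrite HD' in i2;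
    unfold ind_ge in *; destruct (Rle_dec x (V a)), (Rle_dec x (V b)); lra.
  - rewrite (indP_false (incr_through V x c)) by (intros [e _]; contradiction).
    rewrite (indP_false (decr_through V x c)) by (intros [e _]; apply hVc; lra).
    assert (hb : ind_ge x (V b) = ind_ge x (V c)).
    { destruct (Req_dec c b) as [e|ne]; [subst; reflexivity|].
      destruct (L_none V Vm x H c b ltac:(lra) hVc) with (u := b) as [_ e]; auto; [|lra].
      intros s' hs' hs''. specialize (hone s' hs' ltac:(lra)). lra. }
    assert (hmx : Vm c <> x) by (destruct hc as [_ [h|[h|h]]]; lra).
    assert (hm : ind_ge x (Vm c) = ind_ge x (V a)).
    { assert (heps : Rabs (Vm c - x) > 0) by (apply Rabs_pos_lt; lra).
      destruct (hVm c ltac:(lra) _ heps) as [d [hd hdd]].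
      set (u0 := (Rmax a (c - d) + c)/2).
      assert (h1 := Rmax_l a (c-d)). assert (h2 := Rmax_r a (c-d)).
      assert (h3 : Rmax a (c-d) < c) by (apply Rmax_lub_lt; lra).
      specialize (hdd u0 ltac:(unfold u0; lra)).
      destruct (hleft u0 ltac:(unfold u0; lra)) as [_ e]. rewrite <- e.
      symmetry. apply ind_close. auto. }
    lra.
Qed.

Lemma jump_cross V Vm x (H : Hyp V Vm x) s : 0 < s ->
  ind_ge x (V s) - ind_ge x (Vm s) <> 0 -> crossing_set V Vm x s.
Proof.
  destruct H as [[hrc hll] [hVm [[hiso hjmp] hx0]]].
  intros hs hj. split; auto. unfold ind_ge in hj.
  destruct (Rle_dec x (V s)), (Rle_dec x (Vm s)); try lra;
  repeat match goal with H : ~ _ <= _ |- _ => apply Rnot_le_lt in H end.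
  all: destruct (Req_dec (V s) x); [right; right; auto|];
  destruct (Req_dec (Vm s) x) as [e|ne];
  [destruct (hjmp s hs ltac:(lra)); lra | first [left; split; lra | right; left; split; lra]].
Qed.

Definition Pu V Vm x u := exists L, NoDup L /\
  (forall s, In s L <-> crossing_set V Vm x s /\ s <= u) /\
  (V u <> x -> ind_ge x (V u) = ind_ge x (V 0) + sum_list (kap V Vm x) L).

Lemma extend V Vm x (H : Hyp V Vm x) a b c : 0 <= a < b -> Pu V Vm x a -> V a <> x ->
  (forall s, crossing_set V Vm x s -> a < s <= b -> s = c) ->
  forall u, a < u <= b -> Pu V Vm x u.
Proof.
  intros hab [La [hnd [hmem hf]]] hVa hcr u hu.
  destruct (classic (crossing_set V Vm x c /\ a < c <= u)) as [[hc hcu]|hnc].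
  - exists (c :: La). split; [|split].
    + constructor; auto. intro hin; apply hmem in hin; lra.
    + intros s; split.
      * intros [<-|hin]; [split; auto; lra|]. apply hmem in hin; split; [tauto|lra].
      * intros [hs hsu]. destruct (Rle_or_lt s a). right; apply hmem; auto.
        left; symmetry; apply hcr; auto; lra.
    + intros hVu. simpl.
      assert (e := L_one V Vm x H a c u ltac:(lra) ltac:(lra) hVa hVu hc
         ltac:(intros s hs hs'; apply hcr; auto; lra)).
      rewrite e, hf; auto. lra.
  - exists La. split; [auto|split].
    + intros s; split.
      * intros hin; apply hmem in hin; split; [tauto|lra].
      * intros [hs hsu]. destruct (Rle_or_lt s a). apply hmem; auto.
        exfalso. assert (s = c) by (apply hcr; auto; lra). subst. apply hnc; split; auto; lra.
    + intros hVu. destruct (L_none V Vm x H a u ltac:(lra) hVa) with (u := u) as [_ e]; [|lra|].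
      * intros s hs hs'. assert (s = c) by (apply hcr; auto; lra). subst. apply hnc; split; auto; lra.
      * rewrite e. apply hf; auto.
Qed.

Lemma P0 V Vm x : Pu V Vm x 0.
Proof.
  exists []. split; [constructor|split].
  - intros s; split; [intros []|intros [[hs _] hs']; lra].
  - intros _. simpl. lra.
Qed.

Lemma Pall V Vm x (H : Hyp V Vm x) t : 0 < t -> Pu V Vm x t.
Proof.
  intros ht. pose proof H as H'. destruct H' as [[hrc hll] [hVm [[hiso hjmp] hx0]]].
  set (E := fun u => 0 <= u <= t /\ forall v, 0 <= v <= u -> Pu V Vm x v).
  assert (hb : bound E) by (exists t; intros s [hs _]; lra).
  assert (h0E : E 0) by (split; [lra| intros v hv; replace v with 0 by lra; apply P0]).
  destruct (completeness E hb (ex_intro _ 0 h0E)) as [m [hub hlub]].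
  assert (h0m : 0 <= m) by (apply hub; exact h0E).
  assert (hmt : m <= t) by (apply hlub; intros s [hs _]; lra).
  assert (hbelow : forall v, 0 <= v < m -> Pu V Vm x v).
  { intros v hv. destruct (classic (exists s, E s /\ v < s)) as [[s [[hs1 hs2] hvs]]|hn].
    - apply hs2; lra.
    - exfalso. assert (m <= v).
      { apply hlub. intros s hs. destruct (Rle_lt_dec s v); auto.
        exfalso; apply hn; exists s; auto. }
      lra. }
  destruct (IsoR V Vm x H m h0m) as [w [hw hnw]].
  assert (key : exists a c, 0 <= a /\ a <= m /\ V a <> x /\
            (forall v, 0 <= v <= a -> Pu V Vm x v) /\
            forall s, crossing_set V Vm x s -> a < s < w -> s = c).
  { destruct (Req_dec m 0) as [e|ne].
    - exists 0, 0. split; [lra|split; [lra|split; [auto|split]]].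
      + intros v hv. replace v with 0 by lra. apply P0.
      + intros s hs hs'. exfalso. apply (hnw s hs). subst m. destruct hs as [hs0 _]. lra.
    - destruct (IsoL V Vm x H m ltac:(lra)) as [v [hv [hVv hnv]]].
      exists v, m. split; [lra|split; [lra|split; [auto|split]]].
      + intros v' hv'. apply hbelow; lra.
      + intros s hs hs'. destruct (Rtotal_order s m) as [h|[h|h]]; auto; exfalso.
        apply (hnv s hs); lra. apply (hnw s hs); lra. }
  destruct key as [a [c [ha0 [ham [hVa [hPa hcr]]]]]].
  destruct (Rle_dec t ((m + w)/2)) as [htw|htw].
  - destruct (Req_dec a t) as [e|ne]; [apply hPa; lra|].
    apply (extend V Vm x H a t c); try lra; auto.
    + apply hPa; lra.
    + intros s hs hs'. apply hcr; auto; lra.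
  - exfalso.
    assert (E ((m + w)/2)).
    { split; [lra|]. intros v hv. destruct (Rle_or_lt v a). apply hPa; lra.
      apply (extend V Vm x H a ((m + w)/2) c); try lra; auto.
      apply hPa; lra. intros s hs hs'. apply hcr; auto; lra. }
    assert ((m + w)/2 <= m) by (apply hub; auto). lra.
Qed.

Lemma sum_kap V Vm x L : sum_list (kap V Vm x) L =
  sum_list (fun s => indP (incr_through V x s)) L - sum_list (fun s => indP (decr_through V x s)) L
  + sum_list (fun s => ind_ge x (V s) - ind_ge x (Vm s)) L.
Proof. induction L; simpl; [lra|]. rewrite IHL. unfold kap. lra. Qed.

Theorem mainTheorem5 (V Vm : R -> R) (t x : R)
  (hV : cadlag V) (hfv : finite_variation V)
  (hVm : forall s, 0 < s -> is_left_limit V s (Vm s))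
  (ht : 0 < t) (hx : simple_level V Vm x)
  (hx0 : x <> V 0) (hxt : x <> V t) :
  exists lI lD : list R,
    NoDup lI /\ (forall s, In s lI <-> (0 < s <= t /\ incr_through V x s)) /\
    NoDup lD /\ (forall s, In s lD <-> (0 < s <= t /\ decr_through V x s)) /\
    let jump := fun s => ind_ge x (V s) - ind_ge x (Vm s) in
    (exists lJ : list R, NoDup lJ /\ (forall s, In s lJ -> 0 < s <= t) /\
       (forall s, 0 < s <= t -> jump s <> 0 -> In s lJ)) /\
    (forall lJ : list R, NoDup lJ -> (forall s, In s lJ -> 0 < s <= t) ->
       (forall s, 0 < s <= t -> jump s <> 0 -> In s lJ) ->
       ind_ge x (V t) =
         ind_ge x (V 0) + (INR (length lI) - INR (length lD))
         + sum_list jump lJ).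
Proof.
  assert (H : Hyp V Vm x) by (unfold Hyp; tauto).
  destruct (Pall V Vm x H t ht) as [L [hnd [hmem hf]]].
  set (fI := fun s => if excluded_middle_informative (incr_through V x s) then true else false).
  set (fD := fun s => if excluded_middle_informative (decr_through V x s) then true else false).
  exists (filter fI L), (filter fD L).
  split; [apply NoDup_filter; auto|split; [|split; [apply NoDup_filter; auto|split]]].
  - intros s. rewrite filter_In, hmem. unfold fI.
    destruct (excluded_middle_informative (incr_through V x s)) as [i|i]; split.
    + intros [[[hs _] hst] _]. auto.
    + intros [hs _]. split; auto. split; [split; [lra|right; right; apply i]|lra].
    + intros [_ e]; discriminate.
    + intros [_ e]; contradiction.
  - intros s. rewrite filter_In, hmem. unfold fD.
    destruct (excluded_middle_informative (decr_through V x s)) as [i|i]; split.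
    + intros [[[hs _] hst] _]. auto.
    + intros [hs _]. split; auto. split; [split; [lra|right; right]|lra].
      destruct i as [e _]. lra.
    + intros [_ e]; discriminate.
    + intros [_ e]; contradiction.
  - cbv zeta. split.
    + exists L. split; auto. split.
      * intros s hs. apply hmem in hs. destruct hs as [[hs0 _] hst]. lra.
      * intros s hs hj. apply hmem. split; [|lra]. apply (jump_cross V Vm x H); [lra|auto].
    + intros lJ hndJ hJ hJc.
      rewrite hf by auto. rewrite sum_kap, !sum_indP. fold fI fD.
      rewrite (sum_eq_support _ L lJ); auto; [lra|].
      intros s hj. rewrite hmem. split.
      * intros [[hs0 _] hst]. apply hJc; [lra|auto].
      * intros hin. specialize (hJ s hin). split; [|lra]. apply (jump_cross V Vm x H); [lra|auto].
Qed.
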